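(* Let $P=\{p_1,\dots,p_n\}\subset\mathbb{R}^2$ be in general position, $n\ge 3$. (a) The expansion cone $\bar X_0(P)$ is a pointed polyhedral cone (the origin is a vertex) of full dimension $2n-3$ in the subspace of normalized motions. (b) Let $v\in\bar X_0(P)$ and let $E(v)=\{ij:\langle p_i-p_j,v_i-v_j\rangle=0\}$. If $E(v)$ contains (i) two crossing edges, or (ii) a set of edges incident to a common vertex $p$ such that no angle at $p$ between consecutive edges of this set exceeds $\pi$, or (iii) all edges of the boundary of a convex polygon whose vertices are points of $P$, then $E(v)$ contains all edges of the complete graph on the endpoints of the involved edges; in case (iii) this complete graph also includes all points of $P$ lying inside the convex polygon.
   Context: General position: no three points collinear. Infinitesimal motions $v=(v_1,\dots,v_n)\in(\mathbb{R}^2)^n$ are normalized by $v_1^1=v_1^2=v_2^1=0$ (superscripts are coordinates; $p_1,p_2$ have different $y$-coordinates). The expansion cone $\bar X_0(P)$ is the set of normalized $v$ with $\langle p_i-p_j,v_i-v_j\rangle\ge0$ for all $i<j$ (expansive motions). *)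

(* Defs.v *)
From mathcomp Require Import all_boot all_order all_algebra.
Set Implicit Arguments. Unset Strict Implicit. Unset Printing Implicit Defensive.
Import Order.TTheory GRing.Theory Num.Theory.
Local Open Scope ring_scope.

Section Defs.
Variable R : realFieldType.

Definition pt := (R * R)%type.

Definition psub (a b : pt) : pt := (a.1 - b.1, a.2 - b.2).
Definition dot (a b : pt) : R := a.1 * b.1 + a.2 * b.2.
(* determinant det(a, b) = a.x b.y - a.y b.x  (> 0 iff b is counterclockwise of a
   within an angle in (0, pi)) *)
Definition det (a b : pt) : R := a.1 * b.2 - a.2 * b.1.

Variable n : nat.
Implicit Types (p v : 'I_n -> pt).

Definition general_position p : Prop :=
  forall i j k : 'I_n, i != j -> j != k -> i != k ->
    det (psub (p j) (p i)) (psub (p k) (p i)) != 0.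

(* normalization v_1^1 = v_1^2 = v_2^1 = 0 ; p_1 is index 0, p_2 is index 1 *)
Definition normalized v : Prop :=
  forall i : 'I_n, (val i = 0%N -> v i = (0, 0)) /\ (val i = 1%N -> (v i).1 = 0).

Definition edge_val p v (i j : 'I_n) : R := dot (psub (p i) (p j)) (psub (v i) (v j)).

Definition expansive p v : Prop := forall i j : 'I_n, (i < j)%N -> 0 <= edge_val p v i j.

Definition expansion_cone p v : Prop := normalized v /\ expansive p v.

Definition in_E p v (i j : 'I_n) : Prop := i != j /\ edge_val p v i j = 0.

Definition contains_complete p v (A : 'I_n -> Prop) : Prop :=
  forall i j, A i -> A j -> i != j -> in_E p v i j.

Definition crossing p (i j k l : 'I_n) : Prop :=
  uniq [:: i; j; k; l] /\
  exists s t : R, [/\ 0 <= s <= 1, 0 <= t <= 1 &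
    ((1 - s) * (p i).1 + s * (p j).1 = (1 - t) * (p k).1 + t * (p l).1 /\
     (1 - s) * (p i).2 + s * (p j).2 = (1 - t) * (p k).2 + t * (p l).2)].

(* the counterclockwise angle from direction a to direction b lies in (0, pi] *)
Definition ccw_angle_le_pi (a b : pt) : Prop :=
  0 < det a b \/ (det a b = 0 /\ dot a b < 0).

(* The edges {c s : s in S} at the common vertex p_c have no angle between
   consecutive edges exceeding pi: for every edge c s, the next edge c t
   counterclockwise (the one with smallest ccw angle) is at angle <= pi,
   i.e. some edge c t (t in S) is at ccw angle in (0, pi] from c s. *)
Definition star_no_big_angle p (c : 'I_n) (S : pred 'I_n) : Prop :=
  forall s, S s -> exists t, S t /\
    ccw_angle_le_pi (psub (p s) (p c)) (psub (p t) (p c)).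

Definition poly_edges (q : seq 'I_n) : seq ('I_n * 'I_n) :=
  zip q (rot 1 q).

(* q lists (counterclockwise) the vertices of a convex polygon:
   at least 3 distinct vertices, every other vertex strictly left of every edge *)
Definition convex_polygon p (q : seq 'I_n) : Prop :=
  (3 <= size q)%N /\ uniq q /\
  forall e, e \in poly_edges q -> forall m, m \in q -> m != e.1 -> m != e.2 ->
    0 < det (psub (p e.2) (p e.1)) (psub (p m) (p e.1)).

Definition in_polygon p (q : seq 'I_n) (m : 'I_n) : Prop :=
  forall e, e \in poly_edges q -> 0 <= det (psub (p e.2) (p e.1)) (psub (p m) (p e.1)).

End Defs.

(* Main.v *)
Require Import Defs.
From mathcomp Require Import all_boot all_order all_algebra.
From mathcomp Require Import ring lra zify.
Import Order.TTheory GRing.Theory Num.Theory.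
Local Open Scope ring_scope.

Section Aux.
Variable R : realFieldType.

Lemma ex_max (T : finType) (P : pred T) (F : T -> R) i0 :
  P i0 -> exists i, P i /\ forall j, P j -> F j <= F i.
Proof.
move=> Pi0; case: (@real_arg_maxP R T i0 P F Pi0) => [i _|i Pi Hi].
  exact: num_real.
by exists i; split => // j /Hi.
Qed.

Lemma ex_min (T : finType) (P : pred T) (F : T -> R) i0 :
  P i0 -> exists i, P i /\ forall j, P j -> F i <= F j.
Proof.
move=> /(@ex_max T P (fun x => - F x)) [i [Pi Hi]]; exists i; split => // j /Hi.
by rewrite lerN2.
Qed.

Definition om (x y vx vy : pt R) : R :=
  det (psub y x) (psub vy vx) / dot (psub y x) (psub y x).

Lemma perp_rot (a1 a2 b1 b2 : R) : a1 * b1 + a2 * b2 = 0 ->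
  a1 * a1 + a2 * a2 != 0 ->
  let w := (a1 * b2 - a2 * b1) / (a1 * a1 + a2 * a2) in
  b1 = - w * a2 /\ b2 = w * a1.
Proof.
move=> h hN w.
have E1 : b1 * (a1 * a1 + a2 * a2) = - (a1 * b2 - a2 * b1) * a2.
  have -> : - (a1 * b2 - a2 * b1) * a2 = b1 * (a1 * a1 + a2 * a2) - a1 * (a1 * b1 + a2 * b2) by ring.
  by rewrite h mulr0 subr0.
have E2 : b2 * (a1 * a1 + a2 * a2) = (a1 * b2 - a2 * b1) * a1.
  have -> : (a1 * b2 - a2 * b1) * a1 = b2 * (a1 * a1 + a2 * a2) - a2 * (a1 * b1 + a2 * b2) by ring.
  by rewrite h mulr0 subr0.
split.
  by rewrite -(mulfK hN b1) E1 /w; field.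
by rewrite -(mulfK hN b2) E2 /w; field.
Qed.

Lemma key_id (x y z vx vy vz : pt R) :
  dot (psub y x) (psub vy vx) = 0 -> dot (psub z x) (psub vz vx) = 0 ->
  dot (psub y x) (psub y x) != 0 -> dot (psub z x) (psub z x) != 0 ->
  dot (psub y z) (psub vy vz) =
  (om x z vx vz - om x y vx vy) * det (psub y x) (psub z x).
Proof.
case: x => x1 x2; case: y => y1 y2; case: z => z1 z2.
case: vx => vx1 vx2; case: vy => vy1 vy2; case: vz => vz1 vz2.
rewrite /om /dot /det /psub /= => h1 h2 n1 n2.
have := perp_rot _ _ _ _ h1 n1; have := perp_rot _ _ _ _ h2 n2.
set wz := (_ / _); set wy := (_ / _).
clearbody wy wz => /= [[Hz1 Hz2] [Hy1 Hy2]].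
have -> : vy1 = vx1 - wy * (y2 - x2) by rewrite -[vy1](subrK vx1) Hy1; ring.
have -> : vy2 = vx2 + wy * (y1 - x1) by rewrite -[vy2](subrK vx2) Hy2; ring.
have -> : vz1 = vx1 - wz * (z2 - x2) by rewrite -[vz1](subrK vx1) Hz1; ring.
have -> : vz2 = vx2 + wz * (z1 - x1) by rewrite -[vz2](subrK vx2) Hz2; ring.
ring.
Qed.

Lemma nabs_le (x : R) : - `|x| <= x.
Proof. by rewrite lerNl -normrN ler_norm. Qed.

Lemma abs_sq (x : R) : `|x| * `|x| = x * x.
Proof. by rewrite -normrM ger0_norm // -expr2 sqr_ge0. Qed.

Lemma pert_ineq (x y e1 e2 eps : R) : `|e1| <= 2 * eps -> `|e2| <= 2 * eps ->
  0 <= eps -> 4 * eps <= `|x| + `|y| -> 0 <= x * x + y * y + x * e1 + y * e2.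
Proof.
move=> h1 h2 he h4.
have hx := nabs_le (x * e1); have hy := nabs_le (y * e2).
rewrite normrM in hx; rewrite normrM in hy.
have ax := normr_ge0 x; have ay := normr_ge0 y.
have bx : `|x| * `|e1| <= `|x| * (2 * eps) by apply: ler_wpM2l.
have by_ : `|y| * `|e2| <= `|y| * (2 * eps) by apply: ler_wpM2l.
rewrite -abs_sq -(abs_sq y).
set A := `|x| in hx ax bx h4 *; set B := `|y| in hy ay by_ h4 *.
have P1 : 0 <= (A + B) * (A + B - 4 * eps) by apply: mulr_ge0; lra.
have P2 : 0 <= (A - B) * (A - B) by rewrite -expr2 sqr_ge0.
nra.
Qed.
End Aux.
Arguments om {R}.
Arguments key_id {R}.
Arguments perp_rot {R}.

Section Main.
Variable R : realFieldType.
Variable n : nat.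
Implicit Types (p v : 'I_n -> pt R).

Lemma edge_val_sym p v i j : edge_val p v i j = edge_val p v j i.
Proof. rewrite /edge_val /dot /psub /=; ring. Qed.

Lemma edge_val_ii p v i : edge_val p v i i = 0.
Proof. rewrite /edge_val /dot /psub /=; ring. Qed.

Lemma expansive_ge0 p v : expansive p v -> forall i j, 0 <= edge_val p v i j.
Proof.
move=> hE i j; case: (ltngtP i j) => h; first exact: hE.
  by rewrite edge_val_sym; apply: hE.
by rewrite (val_inj h) edge_val_ii.
Qed.

Lemma third_idx (i j : 'I_n) : (2 < n)%N -> exists k : 'I_n, k != i /\ k != j.
Proof.
move=> hn.
have h0 : (0 < n)%N by lia. have h1 : (1 < n)%N by lia.
pose k0 := Ordinal h0; pose k1 := Ordinal h1; pose k2 := Ordinal hn.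
case: (eqVneq k0 i) => [e0|n0]; case: (eqVneq k0 j) => [f0|m0].
- case: (eqVneq k1 i) => [e1|n1]; first by rewrite -e1 in e0.
  case: (eqVneq k1 j) => [f1|m1]; last by exists k1.
  by rewrite -f1 in f0.
- case: (eqVneq k1 j) => [f1|m1].
  + case: (eqVneq k2 i) => [e2|n2]; first by rewrite -e2 in e0.
    case: (eqVneq k2 j) => [f2|m2]; last by exists k2.
    by rewrite -f2 in f1.
  + case: (eqVneq k1 i) => [e1|n1]; last by exists k1.
    by rewrite -e1 in e0.
- case: (eqVneq k1 i) => [e1|n1].
  + case: (eqVneq k2 i) => [e2|n2]; first by rewrite -e2 in e1.
    case: (eqVneq k2 j) => [f2|m2]; last by exists k2.
    by rewrite -f2 in f0.
  + case: (eqVneq k1 j) => [f1|m1]; last by exists k1.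
    by rewrite -f1 in f0.
- by exists k0.
Qed.

Lemma gp_inj p : (2 < n)%N -> general_position p -> forall i j, i != j -> p i != p j.
Proof.
move=> hn hgp i j hij; apply/eqP => e.
have [k [hki hkj]] := third_idx i j hn.
have := hgp i j k hij; rewrite eq_sym hkj eq_sym hki => /(_ isT isT).
by rewrite e /det /psub /= !subrr !mul0r subrr eqxx.
Qed.

Lemma sq_pos (x : R) : x != 0 -> 0 < x * x.
Proof. by move=> h; rewrite -expr2 exprn_even_gt0 //= h orbT. Qed.

Lemma sq_ge0 (x : R) : 0 <= x * x.
Proof. by rewrite -expr2 sqr_ge0. Qed.

Lemma dot_self_gt0 (a b : pt R) : a != b -> 0 < dot (psub a b) (psub a b).
Proof.
case: a => a1 a2; case: b => b1 b2 hne; rewrite /dot /psub /=.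
have [e1|n1] := eqVneq a1 b1.
  have [e2|n2] := eqVneq a2 b2; first by rewrite e1 e2 eqxx in hne.
  have := sq_pos (a2 - b2); rewrite subr_eq0 => /(_ n2).
  have := sq_ge0 (a1 - b1); lra.
have := sq_pos (a1 - b1); rewrite subr_eq0 => /(_ n1).
have := sq_ge0 (a2 - b2); lra.
Qed.

Lemma zero_of_perp (a1 a2 b1 b2 x1 x2 : R) : a1 * x1 + a2 * x2 = 0 ->
  b1 * x1 + b2 * x2 = 0 -> a1 * b2 - a2 * b1 != 0 -> x1 = 0 /\ x2 = 0.
Proof.
move=> ha hb hD.
have E1 : (a1 * b2 - a2 * b1) * x1 = b2 * (a1 * x1 + a2 * x2) - a2 * (b1 * x1 + b2 * x2) by ring.
have E2 : (a1 * b2 - a2 * b1) * x2 = a1 * (b1 * x1 + b2 * x2) - b1 * (a1 * x1 + a2 * x2) by ring.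
rewrite ha hb !mulr0 subr0 in E1 E2.
move/eqP: E1; move/eqP: E2; rewrite !mulf_eq0 (negbTE hD) /= => /eqP -> /eqP ->; done.
Qed.

Definition negv v := fun i => (- (v i).1, - (v i).2).

Lemma edge_val_neg p v i j : edge_val p (negv v) i j = - edge_val p v i j.
Proof. rewrite /edge_val /negv /dot /psub /=; ring. Qed.

Lemma part_a1 p : (2 < n)%N -> general_position p ->
  (forall i j : 'I_n, val i = 0%N -> val j = 1%N -> (p i).2 != (p j).2) ->
  forall v, expansion_cone p v -> expansion_cone p (negv v) -> forall i, v i = (0, 0).
Proof.
move=> hn hgp hy v [hnv hev] [_ hev'] i.
have hz : forall i j, edge_val p v i j = 0.
  move=> a b; have := expansive_ge0 _ _ hev a b; have := expansive_ge0 _ _ hev' a b.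
  rewrite edge_val_neg; lra.
have h0 : (0 < n)%N by lia. have h1 : (1 < n)%N by lia.
pose i0 := Ordinal h0; pose i1 := Ordinal h1.
have v0 : v i0 = (0, 0) by case: (hnv i0) => ->.
have v1 : v i1 = (0, 0).
  have := (hnv i1).2 erefl; have := hz i0 i1; have := hy i0 i1 erefl erefl.
  rewrite /edge_val /dot /psub v0 /=; case: (v i1) => a b /= hd.
  move=> e ha; subst a; congr pair; apply/eqP; move: e.
  move=> e; have E : ((p i0).2 - (p i1).2) * b = 0 by rewrite -oppr0 -e; ring.
  by move/eqP: E; rewrite mulf_eq0 subr_eq0 (negbTE hd).
have [e0|n0] := eqVneq i i0; first by rewrite e0.
have [e1|n1] := eqVneq i i1; first by rewrite e1.
have := hgp i0 i1 i isT; rewrite [i1 == i]eq_sym n1 [i0 == i]eq_sym n0 => /(_ isT isT).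
have := hz i i0; have := hz i i1.
rewrite /edge_val /dot /det /psub v0 v1 /=; case: (v i) => x1 x2 /=.
rewrite !subr0 => ha hb hD.
suff hD' : ((p i).1 - (p i0).1) * ((p i).2 - (p i1).2) - ((p i).2 - (p i0).2) * ((p i).1 - (p i1).1) != 0.
  by have [-> ->] := zero_of_perp _ _ _ _ _ _ hb ha hD'.
by apply: contra_neq hD => H; rewrite -H; ring.
Qed.

Lemma gap_pos (a b : pt R) : a != b -> 0 < `|a.1 - b.1| + `|a.2 - b.2|.
Proof.
case: a => a1 a2; case: b => b1 b2 hne /=.
have g1 := normr_ge0 (a1 - b1); have g2 := normr_ge0 (a2 - b2).
have [e1|n1] := eqVneq a1 b1.
  have [e2|n2] := eqVneq a2 b2; first by rewrite e1 e2 eqxx in hne.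
  have : 0 < `|a2 - b2| by rewrite normr_gt0 subr_eq0.
  lra.
have : 0 < `|a1 - b1| by rewrite normr_gt0 subr_eq0.
lra.
Qed.

Lemma part_a2 p : (2 < n)%N -> general_position p ->
  (forall i j : 'I_n, val i = 0%N -> val j = 1%N -> (p i).2 != (p j).2) ->
  exists v, expansion_cone p v /\ exists eps : R, 0 < eps /\
      forall w, normalized w ->
        (forall i, `|(w i).1 - (v i).1| < eps /\ `|(w i).2 - (v i).2| < eps) ->
        expansion_cone p w.
Proof.
move=> hn hgp hy.
have h0 : (0 < n)%N by lia. have h1 : (1 < n)%N by lia.
pose i0 := Ordinal h0; pose i1 := Ordinal h1.
pose o := p i0.
pose dx := (p i1).1 - o.1; pose dy := (p i1).2 - o.2.
have hdy : dy != 0 by rewrite subr_eq0 eq_sym; apply: hy.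
pose wr := dx / dy.
pose v0 := fun i => (((p i).1 - o.1) - wr * ((p i).2 - o.2),
                     ((p i).2 - o.2) + wr * ((p i).1 - o.1)).
have hv0 : forall i j, edge_val p v0 i j =
   ((p i).1 - (p j).1) * ((p i).1 - (p j).1) + ((p i).2 - (p j).2) * ((p i).2 - (p j).2).
  by move=> i j; rewrite /edge_val /v0 /dot /psub /=; ring.
have hinj := gp_inj p hn hgp.
pose g := fun ij : 'I_n * 'I_n => `|(p ij.1).1 - (p ij.2).1| + `|(p ij.1).2 - (p ij.2).2|.
have [[a b] [/= hab hmin]] := @ex_min R _ (fun ij : 'I_n * 'I_n => ij.1 != ij.2) g (i0, i1) isT.
have gpos : 0 < g (a, b) by apply: gap_pos; apply: hinj.
exists v0; split.
  split.
    move=> i; split=> hi.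
      have -> : i = i0 by apply: val_inj.
      by rewrite /v0 /o /= !subrr !mulr0 subrr addr0.
    have -> : i = i1 by apply: val_inj.
    by rewrite /v0 /= -/dx -/dy /wr divfK // subrr.
  move=> i j hij; rewrite hv0; apply: addr_ge0; apply: sq_ge0.
exists (g (a, b) / 4); split; first by apply: divr_gt0.
move=> w hw hclose; split => // i j hij.
have hne : i != j by rewrite neq_ltn hij.
set e1 := ((w i).1 - (v0 i).1) - ((w j).1 - (v0 j).1).
set e2 := ((w i).2 - (v0 i).2) - ((w j).2 - (v0 j).2).
have -> : edge_val p w i j = edge_val p v0 i j + ((p i).1 - (p j).1) * e1 + ((p i).2 - (p j).2) * e2.
  by rewrite /edge_val /dot /psub /e1 /e2 /=; ring.
rewrite hv0; apply: pert_ineq (g (a, b) / 4) _ _ _ _.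
- have [c1 _] := hclose i; have [c2 _] := hclose j.
  apply: le_trans (ler_normB _ _) _; lra.
- have [_ c1] := hclose i; have [_ c2] := hclose j.
  apply: le_trans (ler_normB _ _) _; lra.
- by apply: divr_ge0; [apply: ltW|].
- have := hmin (i, j) hne; rewrite /g /=; lra.
Qed.

Lemma coll3 (x y z : pt R) r : x.1 = (1 - r) * y.1 + r * z.1 ->
  x.2 = (1 - r) * y.2 + r * z.2 -> det (psub y x) (psub z x) = 0.
Proof. by case: x => x1 x2; case: y; case: z => /= ? ? ? ? -> ->; rewrite /det /psub /=; ring. Qed.

Lemma cross_id (pi pj pk pl vi vj vk vl : pt R) (s t : R) :
  (1 - s) * s * dot (psub pi pj) (psub vi vj) + (1 - t) * t * dot (psub pk pl) (psub vk vl)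
  - (1 - s) * (1 - t) * dot (psub pi pk) (psub vi vk) - (1 - s) * t * dot (psub pi pl) (psub vi vl)
  - s * (1 - t) * dot (psub pj pk) (psub vj vk) - s * t * dot (psub pj pl) (psub vj vl)
  = - (((1 - s) * vi.1 + s * vj.1 - (1 - t) * vk.1 - t * vl.1) *
       ((1 - s) * pi.1 + s * pj.1 - ((1 - t) * pk.1 + t * pl.1)) +
       ((1 - s) * vi.2 + s * vj.2 - (1 - t) * vk.2 - t * vl.2) *
       ((1 - s) * pi.2 + s * pj.2 - ((1 - t) * pk.2 + t * pl.2))).
Proof. rewrite /dot /psub /=; ring. Qed.

Lemma pos_comb4 (c1 c2 c3 c4 x1 x2 x3 x4 : R) : 0 < c1 -> 0 < c2 -> 0 < c3 -> 0 < c4 ->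
  0 <= x1 -> 0 <= x2 -> 0 <= x3 -> 0 <= x4 -> c1 * x1 + c2 * x2 + c3 * x3 + c4 * x4 = 0 ->
  [/\ x1 = 0, x2 = 0, x3 = 0 & x4 = 0].
Proof.
move=> h1 h2 h3 h4 g1 g2 g3 g4 e.
have m1 : 0 <= c1 * x1 by apply: mulr_ge0; [apply: ltW|].
have m2 : 0 <= c2 * x2 by apply: mulr_ge0; [apply: ltW|].
have m3 : 0 <= c3 * x3 by apply: mulr_ge0; [apply: ltW|].
have m4 : 0 <= c4 * x4 by apply: mulr_ge0; [apply: ltW|].
have z1 : c1 * x1 = 0 by lra. have z2 : c2 * x2 = 0 by lra.
have z3 : c3 * x3 = 0 by lra. have z4 : c4 * x4 = 0 by lra.
move/eqP: z1; move/eqP: z2; move/eqP: z3; move/eqP: z4.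
rewrite !mulf_eq0 !(gt_eqF h1) !(gt_eqF h2) !(gt_eqF h3) !(gt_eqF h4) /=.
by move=> /eqP -> /eqP -> /eqP -> /eqP ->.
Qed.

Lemma part_b1 p v : general_position p -> expansive p v ->
  forall i j k l : 'I_n, crossing p i j k l -> in_E p v i j -> in_E p v k l ->
       contains_complete p v (fun m => m \in [:: i; j; k; l]).
Proof.
move=> hgp hev i j k l [hu [s [t [/andP[s0 s1] /andP[t0 t1] [eq1 eq2]]]]] [_ Eij] [_ Ekl].
move: hu; rewrite /= !inE !negb_or => /andP[/andP[hij /andP[hik hil]] /andP[/andP[hjk hjl] /andP[hkl _]]].
have sn0 : s != 0.
  apply/eqP => e; move: eq1 eq2; rewrite e subr0 !mul1r !mul0r !addr0 => q1 q2.
  by move: (hgp i k l hik hkl hil); rewrite (coll3 _ _ _ _ q1 q2) eqxx.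
have sn1 : s != 1.
  apply/eqP => e; move: eq1 eq2; rewrite e subrr !mul1r !mul0r !add0r => q1 q2.
  by move: (hgp j k l hjk hkl hjl); rewrite (coll3 _ _ _ _ q1 q2) eqxx.
have tn0 : t != 0.
  apply/eqP => e; move: eq1 eq2; rewrite e subr0 !mul1r !mul0r !addr0 => q1 q2.
  by have := hgp k i j; rewrite [k == i]eq_sym hik [k == j]eq_sym hjk hij (coll3 _ _ _ _ (esym q1) (esym q2)) eqxx => /(_ isT isT isT).
have tn1 : t != 1.
  apply/eqP => e; move: eq1 eq2; rewrite e subrr !mul1r !mul0r !add0r => q1 q2.
  by have := hgp l i j; rewrite [l == i]eq_sym hil [l == j]eq_sym hjl hij (coll3 _ _ _ _ (esym q1) (esym q2)) eqxx => /(_ isT isT isT).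
have sp : 0 < s by rewrite lt_neqAle eq_sym sn0.
have tp : 0 < t by rewrite lt_neqAle eq_sym tn0.
have sp' : 0 < 1 - s by rewrite subr_gt0 lt_neqAle sn1.
have tp' : 0 < 1 - t by rewrite subr_gt0 lt_neqAle tn1.
have := cross_id (p i) (p j) (p k) (p l) (v i) (v j) (v k) (v l) s t.
rewrite -/(edge_val p v i j) -/(edge_val p v k l) -/(edge_val p v i k) -/(edge_val p v i l).
rewrite -/(edge_val p v j k) -/(edge_val p v j l) Eij Ekl.
rewrite eq1 eq2 !subrr => H.
have ge := expansive_ge0 _ _ hev.
have H' : (1 - s) * (1 - t) * edge_val p v i k + (1 - s) * t * edge_val p v i l +
   s * (1 - t) * edge_val p v j k + s * t * edge_val p v j l = 0.
  rewrite !mulr0 in H; lra.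
have [Eik Eil Ejk Ejl] := pos_comb4 _ _ _ _ _ _ _ _ (mulr_gt0 sp' tp') (mulr_gt0 sp' tp) (mulr_gt0 sp tp') (mulr_gt0 sp tp)
  (ge i k) (ge i l) (ge j k) (ge j l) H'.
have Eji : edge_val p v j i = 0 by rewrite edge_val_sym.
have Elk : edge_val p v l k = 0 by rewrite edge_val_sym.
have Eki : edge_val p v k i = 0 by rewrite edge_val_sym.
have Eli : edge_val p v l i = 0 by rewrite edge_val_sym.
have Ekj : edge_val p v k j = 0 by rewrite edge_val_sym.
have Elj : edge_val p v l j = 0 by rewrite edge_val_sym.
move=> x y; rewrite !inE => /or4P [] /eqP -> /or4P [] /eqP -> hxy;
  (split; [done | try assumption]); by rewrite eqxx in hxy.
Qed.

Lemma frac_lt (a b c d : R) : 0 < b -> 0 < d -> a * d < c * b -> a / b < c / d.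
Proof.
move=> hb hd h; rewrite -subr_gt0.
have -> : c / d - a / b = (c * b - a * d) / (b * d).
  by field; apply/andP; split; rewrite gt_eqF.
by apply: divr_gt0; [rewrite subr_gt0 | apply: mulr_gt0].
Qed.

Lemma det_id (u x y : pt R) : dot u u * det x y = dot u x * det u y - det u x * dot u y.
Proof. rewrite /dot /det; ring. Qed.

Lemma edge_c p v c s : edge_val p v c s = dot (psub (p s) (p c)) (psub (v s) (v c)).
Proof. rewrite /edge_val /dot /psub /=; ring. Qed.

Lemma det_anti (a b : pt R) : det a b = - det b a.
Proof. rewrite /det; ring. Qed.

Lemma part_b2 p v : (2 < n)%N -> general_position p -> expansive p v ->
    forall (c : 'I_n) (S : pred 'I_n), ~~ S c -> star_no_big_angle p c S ->
       (forall s, S s -> in_E p v c s) ->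
       contains_complete p v (fun m => (m == c) || S m).
Proof.
move=> hn hgp hev c S hSc hstar hE.
have ge := expansive_ge0 _ _ hev.
have hinj := gp_inj p hn hgp.
have neqc : forall s, S s -> s != c by move=> s Ss; apply: contraNneq hSc => <-.
pose d := fun s => psub (p s) (p c).
pose al := fun s => om (p c) (p s) (v c) (v s).
have hperp : forall s, S s -> dot (d s) (psub (v s) (v c)) = 0.
  by move=> s Ss; rewrite /d -(edge_c p v c s); case: (hE s Ss).
have hnz : forall s, S s -> dot (d s) (d s) != 0.
  by move=> s Ss; rewrite gt_eqF // dot_self_gt0 // hinj // neqc.
have Ekey : forall s t, S s -> S t -> edge_val p v s t = (al t - al s) * det (d s) (d t).
  by move=> s t Ss St; rewrite /edge_val (key_id (p c) (p s) (p t) (v c) (v s) (v t)) // ?hperp ?hnz.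
have gpd : forall s t, S s -> S t -> s != t -> det (d s) (d t) != 0.
  move=> s t Ss St hst; have := hgp c s t; rewrite [c == s]eq_sym neqc //.
  by rewrite [c == t]eq_sym neqc // hst => /(_ isT isT isT).
have alc : forall s t, S s -> S t -> al s = al t.
  move=> s0 t0 Ss0 St0.
  have [sm [Ssm hmax]] := @ex_max R _ S al s0 Ss0.
  suff H : forall u, S u -> al u = al sm by rewrite !H.
  move=> u Su; apply/eqP; rewrite eq_le hmax //=; rewrite leNgt; apply/negP => hlt.
  have factA : forall x, S x -> al x = al sm -> 0 < det (d u) (d x).
    move=> x Sx hx.
    have hxu : x != u by apply: contraTneq hlt => e; rewrite -e hx ltxx.
    have := ge x u; rewrite Ekey // hx.
    have := gpd x u Sx Su hxu; rewrite det_anti oppr_eq0 => hnz0 hge.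
    rewrite det_anti in hge.
    have hneg : al u - al sm < 0 by rewrite subr_lt0.
    have : 0 <= det (d u) (d x).
      by move: hge; rewrite mulrN -mulNr pmulr_rge0 ?oppr_gt0 // -det_anti.
    by rewrite le_eqVlt eq_sym (negbTE hnz0).
  pose P' := fun x => S x && (al x == al sm).
  pose f := fun x => dot (d u) (d x) / det (d u) (d x).
  have Psm : P' sm by rewrite /P' Ssm eqxx.
  have [ss [/andP [Sss /eqP hss] hminf]] := @ex_min R _ P' f sm Psm.
  have [t [St hccw]] := hstar ss Sss.
  have hdet : 0 < det (d ss) (d t).
    case: hccw => [//|[h0 hdot]].
    have [est|nst] := eqVneq ss t.
      have := dot_self_gt0 (p ss) (p c) (hinj _ _ (neqc _ Sss)).
      by rewrite -est in hdot; rewrite ltNge (ltW hdot).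
    by move: (gpd ss t Sss St nst); rewrite /d h0 eqxx.
  have hte : al t = al sm.
    apply/eqP; rewrite eq_le hmax //=.
    have := ge ss t; rewrite Ekey // hss pmulr_lge0 //.
    by rewrite subr_ge0.
  have := hminf t; rewrite /P' St hte eqxx => /(_ isT).
  rewrite leNgt => /negP H; apply: H; rewrite /f.
  apply: frac_lt; [exact: factA | exact: factA |].
  rewrite -subr_gt0 [dot (d u) (d t) * _]mulrC -det_id; apply: mulr_gt0 => //.
  by rewrite lt_neqAle eq_sym hnz //= le_eqVlt dot_self_gt0 ?orbT // hinj // neqc.
move=> x y /orP[/eqP ->|Sx] /orP[/eqP ->|Sy] hxy.
- by rewrite eqxx in hxy.
- by apply: hE.
- by split => //; rewrite edge_val_sym; case: (hE x Sx).
- by split => //; rewrite Ekey // (alc x y) // subrr mul0r.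
Qed.

Definition sc (k i : nat) : nat := if (i.+1 < k)%N then i.+1 else 0%N.
Definition pr (k i : nat) : nat := if i == 0%N then k.-1 else i.-1.

Lemma mem_edge (q : seq 'I_n) a0 i : (i < size q)%N ->
  (nth a0 q i, nth a0 q (sc (size q) i)) \in poly_edges q.
Proof.
case: q => [|x s] //= hi; rewrite /poly_edges rot1_cons.
apply/(nthP (a0, a0)); exists i.
  by rewrite size_zip size_rcons /= minnn.
rewrite nth_zip /=; last by rewrite size_rcons.
rewrite nth_rcons /sc /=; congr pair.
case: ltnP => h1; first by rewrite ltnS h1.
have -> : i = size s by lia.
by rewrite ltnn eqxx.
Qed.

Lemma sc_lt k i : (0 < k)%N -> (sc k i < k)%N.
Proof. by rewrite /sc; case: ifP. Qed.

Lemma pr_lt k i : (i < k)%N -> (pr k i < k)%N.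
Proof. rewrite /pr; case: eqP => _; lia. Qed.

Lemma sc_pr k i : (i < k)%N -> sc k (pr k i) = i.
Proof. rewrite /sc /pr; case: eqP => [->|h] hi; case: ifP => h2; lia. Qed.

Lemma idx3 k i : (2 < k)%N -> (i < k)%N ->
  [/\ sc k i != i, pr k i != i & sc k i != pr k i].
Proof.
rewrite /sc /pr => hk hi; case: (ltnP i.+1 k) => h1; case: (eqVneq i 0%N) => h2;
  split; apply/eqP; lia.
Qed.

Lemma om_sym (x y vx vy : pt R) : om x y vx vy = om y x vy vx.
Proof. by rewrite /om; congr (_ / _); rewrite /det /dot /psub /=; ring. Qed.

Lemma rot_of_perp (x y vx vy : pt R) : dot (psub y x) (psub vy vx) = 0 ->
  dot (psub y x) (psub y x) != 0 ->
  vy.1 - vx.1 = - om x y vx vy * (y.2 - x.2) /\ vy.2 - vx.2 = om x y vx vy * (y.1 - x.1).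
Proof. by move=> h1 h2; have := perp_rot _ _ _ _ h1 h2. Qed.

Lemma dot_nn (a b c d : pt R) : dot (psub a b) (psub c d) = dot (psub b a) (psub d c).
Proof. rewrite /dot /psub /=; ring. Qed.

Lemma det_flip (a b c : pt R) : det (psub a b) (psub c b) = - det (psub b a) (psub c a).
Proof. rewrite /det /psub /=; ring. Qed.

Lemma cram (a b z m w : pt R) :
  det (psub b a) (psub z a) * (- dot (psub a m) w) =
  det (psub a z) (psub m z) * (dot (psub b m) w - dot (psub a m) w) +
  det (psub b a) (psub m a) * (dot (psub z m) w - dot (psub a m) w).
Proof. rewrite /det /dot /psub /=; ring. Qed.

Lemma part_b3 p v : (2 < n)%N -> general_position p -> expansive p v ->
  forall q : seq 'I_n, convex_polygon p q ->
       (forall e, e \in poly_edges q -> in_E p v e.1 e.2) ->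
       contains_complete p v (in_polygon p q).
Proof.
move=> hn hgp hev q [hk [hu hconv]] hside.
have ge := expansive_ge0 _ _ hev.
have hinj := gp_inj p hn hgp.
have h0 : (0 < n)%N by lia.
pose a0 := Ordinal h0.
pose k := size q.
have k0 : (0 < k)%N by rewrite /k; lia.
pose Q := fun i => nth a0 q i.
have hQq : forall i, (i < k)%N -> Q i \in q by move=> i hi; apply: mem_nth.
have hQe : forall i j, (i < k)%N -> (j < k)%N -> (Q i == Q j) = (i == j).
  by move=> i j hi hj; apply: nth_uniq.
have hsd : forall i, (i < k)%N -> edge_val p v (Q i) (Q (sc k i)) = 0.
  by move=> i hi; case: (hside _ (mem_edge q a0 i hi)).
have hcv : forall i, (i < k)%N -> forall m, m \in q -> m != Q i -> m != Q (sc k i) ->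
    0 < det (psub (p (Q (sc k i))) (p (Q i))) (psub (p m) (p (Q i))).
  by move=> i hi m hm h1 h2; apply: (hconv _ (mem_edge q a0 i hi)).
pose w := fun i => om (p (Q i)) (p (Q (sc k i))) (v (Q i)) (v (Q (sc k i))).
have hvert : forall i, (i < k)%N -> w i <= w (pr k i).
  move=> i hi.
  have [d1 d2 d3] := idx3 _ _ hk hi.
  have hia := pr_lt _ _ hi; have hsc := sc_lt k i k0.
  have hsia := sc_pr _ _ hi.
  set ia := pr k i in hia hsia d2 d3 *.
  have Eac := ge (Q ia) (Q (sc k i)).
  have Dp := hcv ia hia (Q (sc k i)) (hQq _ hsc).
  rewrite hsia !hQe // d1 d3 in Dp; have {}Dp := Dp isT isT.
  have s1 := hsd ia hia; rewrite hsia in s1.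
  have s2 := hsd i hi; rewrite /edge_val dot_nn in s2.
  have n1 : dot (psub (p (Q ia)) (p (Q i))) (psub (p (Q ia)) (p (Q i))) != 0.
    by rewrite gt_eqF // dot_self_gt0 // hinj // hQe.
  have n2 : dot (psub (p (Q (sc k i))) (p (Q i))) (psub (p (Q (sc k i))) (p (Q i))) != 0.
    by rewrite gt_eqF // dot_self_gt0 // hinj // hQe.
  rewrite /edge_val (key_id (p (Q i)) (p (Q ia)) (p (Q (sc k i))) (v (Q i)) (v (Q ia)) (v (Q (sc k i))) s1 s2 n1 n2) in Eac.
  rewrite om_sym det_flip mulrN oppr_ge0 pmulr_lle0 // subr_le0 in Eac.
  by rewrite /w hsia [om (p (Q i)) _ _ _]om_sym [om (p (Q ia)) _ _ _]om_sym.
have hle0 : forall i, (i < k)%N -> w i <= w 0%N.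
  elim=> [//|i IH] hi.
  apply: le_trans (IH _) => //; last by lia.
  by have := hvert i.+1 hi; rewrite /pr /=.
have hlast : forall j, (j < k)%N -> w k.-1 <= w (k.-1 - j)%N.
  elim=> [|j IH] hj; first by rewrite subn0.
  apply: le_trans (IH _) _; first by lia.
  have := hvert (k.-1 - j)%N ltac:(lia); rewrite /pr.
  case: eqP => [?|_]; first by lia.
  by have -> : (k.-1 - j).-1 = (k.-1 - j.+1)%N by lia.
have hk0 : w 0%N <= w k.-1 by have := hvert 0%N k0.
have weq : forall i, (i < k)%N -> w i = w 0%N.
  move=> i hi; apply/eqP; rewrite eq_le hle0 //=.
  apply: le_trans hk0 _; apply: le_trans (hlast (k.-1 - i)%N _) _; first by lia.
  by have -> : (k.-1 - (k.-1 - i))%N = i by lia.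
pose Om := w 0%N; pose o := p (Q 0%N); pose vo := v (Q 0%N).
pose W := fun x => ((v x).1 - vo.1 + Om * ((p x).2 - o.2), (v x).2 - vo.2 - Om * ((p x).1 - o.1)).
have hW : forall i, (i < k)%N -> W (Q i) = (0, 0).
  elim=> [|i IH] hi.
    by rewrite /W /vo /o !subrr !mulr0 !addr0 subr0.
  have hs : sc k i = i.+1 by rewrite /sc hi.
  have s1 := hsd i (ltnW hi); rewrite hs /edge_val dot_nn in s1.
  have nz : dot (psub (p (Q i.+1)) (p (Q i))) (psub (p (Q i.+1)) (p (Q i))) != 0.
    by rewrite gt_eqF // dot_self_gt0 // hinj // hQe ?(ltnW hi) //; apply/eqP; lia.
  have [e1 e2] := rot_of_perp _ _ _ _ s1 nz.
  have := weq i (ltnW hi); rewrite /w hs -/Om => hom; rewrite hom in e1 e2.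
  have [E1 E2] : (W (Q i)).1 = 0 /\ (W (Q i)).2 = 0 by rewrite IH ?(ltnW hi).
  rewrite /W /= in E1 E2; rewrite /W; congr pair.
    transitivity ((v (Q i)).1 - vo.1 + Om * ((p (Q i)).2 - o.2) +
      (((v (Q i.+1)).1 - (v (Q i)).1) + Om * ((p (Q i.+1)).2 - (p (Q i)).2))).
    rewrite /Om /vo /o /w; ring.
    by rewrite E1 e1 /Om /w; ring.
  transitivity ((v (Q i)).2 - vo.2 - Om * ((p (Q i)).1 - o.1) +
    (((v (Q i.+1)).2 - (v (Q i)).2) - Om * ((p (Q i.+1)).1 - (p (Q i)).1))); first ring.
  by rewrite E2 e2 /Om /w; ring.
have hE : forall x y, edge_val p v x y = dot (psub (p x) (p y)) (psub (W x) (W y)).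
  by move=> x y; rewrite /edge_val /W /dot /psub /=; ring.
have hWq : forall x, x \in q -> W x = (0, 0).
  move=> x hx; have hi : (index x q < k)%N by rewrite index_mem.
  by have := hW _ hi; rewrite /Q nth_index.
have hWm : forall m, in_polygon p q m -> W m = (0, 0).
  move=> m hpol; case: (boolP (m \in q)) => hm; first exact: hWq.
  pose psi := fun y => dot (psub (p y) (p m)) (W m).
  have psi_le : forall y, y \in q -> psi y <= 0.
    move=> y hy; have := ge m y.
    have -> : edge_val p v m y = - psi y.
      by rewrite hE (hWq y hy) /psi /dot /psub /=; ring.
    by rewrite oppr_ge0.
  have [a [haq hamax]] := @ex_max R _ (fun y => y \in q) psi (Q 0%N) (hQq _ k0).
  pose ia := index a q.
  have hia : (ia < k)%N by rewrite index_mem.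
  have hQa : Q ia = a by rewrite /Q nth_index.
  have [d1 d2 d3] := idx3 _ _ hk hia.
  have hpa := pr_lt _ _ hia; have hsa := sc_lt k ia k0.
  have hspa := sc_pr _ _ hia.
  set z := Q (pr k ia); set b := Q (sc k ia).
  have hzq : z \in q by apply: hQq.
  have hbq : b \in q by apply: hQq.
  have mz : m != z by apply: contraNneq hm => ->.
  have mb : m != b by apply: contraNneq hm => ->.
  have ma : m != a by apply: contraNneq hm => ->.
  have ab : a != b by rewrite -hQa hQe // eq_sym.
  have az : a != z by rewrite -hQa hQe // eq_sym.
  have zb : z != b by rewrite hQe // eq_sym.
  have lam : 0 < det (psub (p a) (p z)) (psub (p m) (p z)).
    have := hpol _ (mem_edge q a0 _ hpa); rewrite /= hspa -[nth a0 q ia]/(Q ia) hQa -[nth a0 q (pr k ia)]/z => H.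
    rewrite lt_neqAle H andbT eq_sym.
    by apply: hgp; rewrite // eq_sym.
  have mu : 0 < det (psub (p b) (p a)) (psub (p m) (p a)).
    have := hpol _ (mem_edge q a0 _ hia); rewrite /= -[nth a0 q ia]/(Q ia) hQa -[nth a0 q (sc k ia)]/b => H.
    rewrite lt_neqAle H andbT eq_sym.
    by apply: hgp; rewrite // eq_sym.
  have Dp : 0 < det (psub (p b) (p a)) (psub (p z) (p a)).
    have := hcv ia hia z hzq; rewrite hQa -/b => H; apply: H => //; by rewrite eq_sym.

  have := cram (p a) (p b) (p z) (p m) (W m).
  rewrite -/(psi a) -/(psi b) -/(psi z).
  have pa := psi_le a haq; have pb := hamax b hbq; have pz := hamax z hzq.
  move=> C.
  have L0 : 0 <= det (psub (p b) (p a)) (psub (p z) (p a)) * - psi a.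
    by apply: mulr_ge0; [apply: ltW | rewrite oppr_ge0].
  have R1 : det (psub (p a) (p z)) (psub (p m) (p z)) * (psi b - psi a) <= 0.
    by rewrite pmulr_rle0 // subr_le0.
  have R2 : det (psub (p b) (p a)) (psub (p m) (p a)) * (psi z - psi a) <= 0.
    by rewrite pmulr_rle0 // subr_le0.
  have Z1 : det (psub (p a) (p z)) (psub (p m) (p z)) * (psi b - psi a) = 0 by lra.
  have Z0 : det (psub (p b) (p a)) (psub (p z) (p a)) * - psi a = 0 by lra.
  move/eqP: Z1; rewrite mulf_eq0 (gt_eqF lam) /= subr_eq0 => /eqP hb.
  move/eqP: Z0; rewrite mulf_eq0 (gt_eqF Dp) /= oppr_eq0 => /eqP ha.
  rewrite ha in hb.
  move: ha hb; rewrite /psi /dot /psub.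
  case: (W m) => w1 w2 /= ha hb.
  have := hgp m a b ma ab mb.
  rewrite /det /psub /= => hD.
  by have [-> ->] := zero_of_perp _ _ _ _ _ _ ha hb hD.
move=> x y hx hy hxy; split => //.
by rewrite hE (hWm x hx) (hWm y hy) /dot /psub /= !subrr !mulr0 addr0.
Qed.

End Main.

Theorem lemma3p2 (R : realFieldType) (n : nat) (p : 'I_n -> pt R) :
  (3 <= n)%N ->
  general_position p ->
  (forall i j : 'I_n, val i = 0%N -> val j = 1%N -> (p i).2 != (p j).2) ->
  (* (a) pointed: the origin is a vertex of the cone *)
  ((forall v, expansion_cone p v -> expansion_cone p (fun i => ((- (v i).1), (- (v i).2))) ->
      forall i, v i = (0, 0)) /\
  (* (a) full-dimensional in the (2n-3)-dim. subspace of normalized motions: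
         nonempty interior relative to that subspace *)
   (exists v, expansion_cone p v /\ exists eps : R, 0 < eps /\
      forall w, normalized w ->
        (forall i, `|(w i).1 - (v i).1| < eps /\ `|(w i).2 - (v i).2| < eps) ->
        expansion_cone p w)) /\
  (forall v, expansion_cone p v ->
    (* (b)(i) two crossing edges *)
    (forall i j k l : 'I_n, crossing p i j k l -> in_E p v i j -> in_E p v k l ->
       contains_complete p v (fun m => m \in [:: i; j; k; l])) /\
    (* (b)(ii) star at p_c with no angle between consecutive edges > pi *)
    (forall (c : 'I_n) (S : pred 'I_n), ~~ S c -> star_no_big_angle p c S ->
       (forall s, S s -> in_E p v c s) ->
       contains_complete p v (fun m => (m == c) || S m)) /\
    (* (b)(iii) boundary of a convex polygon with vertices in P *)
    (forall q : seq 'I_n, convex_polygon p q ->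
       (forall e, e \in poly_edges q -> in_E p v e.1 e.2) ->
       contains_complete p v (in_polygon p q))).
Proof.
move=> h3 hgp hy.
have hn : (2 < n)%N by [].
split; [split|].
- by move=> v hv hv'; apply: (@part_a1 R n p hn hgp hy v hv hv').
- exact: part_a2.
- move=> v [hnv hev]; split; [|split].
  + exact: part_b1.
  + exact: part_b2.
  + exact: part_b3.
Qed.
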